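(* Let $N\ge 2$ agents have true utility functions $F_1,\dots,F_N:\mathbb{R}\to\mathbb{R}$. Let $\boldsymbol{u}^*=(u_1^*,\dots,u_N^* )$ be the optimal solution, assumed unique, of $\max_{\boldsymbol u}\sum_{i}F_i(u_i)$ subject to $\sum_i u_i=0$, and for each $i$ let $\boldsymbol{u}^{(i)}=(u^{(i)}_j)_{j\neq i}$ be the unique optimal solution of $\max\sum_{j\neq i}F_j(u_j)$ subject to $\sum_{j\ne i}u_j=0$. Let $H_i:=\sum_{j\neq i}F_j(u^{(i)}_j)$, $H_{max}:=\max_i H_i$ and $F_{total}:=\sum_j F_j(u_j^* )$. If $F_{total}>0$, $H_i>0$ for all $i$, and the Market Power Balance condition $(N-1)H_{max}\le\sum_i H_i$ holds, then there exist real numbers $\underline c\le\bar c$ such that for every constant $c\in[\underline c,\bar c]$ the Scaled VCG mechanism with scaling factor $c$ satisfies incentive compatibility, efficiency, budget balance and individual rationality simultaneously.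
   Context: Setting: an operator (ISO) wants to choose energy amounts $u_i$ ($u_i\le 0$ for producers, $u_i\ge0$ for consumers) maximizing the social welfare $\sum_i F_i(u_i)$ subject to $\sum_i u_i=0$, but does not know the $F_i$. Each agent $i$ bids a function $\hat F_i$ (not necessarily equal to $F_i$); write $\hat F=(\hat F_1,\dots,\hat F_N)$. The ISO computes $\boldsymbol u^*(\hat F)$ maximizing $\sum_i\hat F_i(u_i)$ subject to $\sum_iu_i=0$, assigns $u_i^*(\hat F)$ to agent $i$, and for each $i$ computes $\boldsymbol u^{(i)}(\hat F)$ maximizing $\sum_{j\ne i}\hat F_j(u_j)$ subject to $\sum_{j\ne i}u_j=0$. In the Scaled VCG (SVCG) mechanism with constant scaling factor $c$ (fixed in advance, independent of the bids), agent $i$ pays $p_i(\hat F)=c\sum_{j\ne i}\hat F_j(u_j^{(i)}(\hat F))-\sum_{j\neq i}\hat F_j(u_j^*(\hat F))$. Agent $i$'s net utility is $F_i(u_i^*(\hat F))-p_i(\hat F)$. Incentive compatibility (IC): for every $i$ and every bids of the other agents, bidding $\hat F_i=F_i$ maximizes agent $i$'s net utility. Efficiency (EF): under truthful bids the allocation maximizes $\sum_iF_i(u_i)$ subject to $\sum_iu_i=0$. Budget balance (BB): under truthful bids $\sum_i p_i\ge 0$. Individual rationality (IR): under truthful bids $F_i(u_i^* )-p_i\ge0$ for every $i$. *)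

(* Defs.v *)
From mathcomp Require Import all_boot all_order all_algebra.
From mathcomp Require Import reals.
Set Implicit Arguments. Unset Strict Implicit. Unset Printing Implicit Defensive.
Import Order.TTheory GRing.Theory Num.Theory.
Local Open Scope ring_scope.

Section SVCG.
Variables (R : realType) (N : nat).

Definition profile := 'I_N -> R -> R.
Definition alloc := 'I_N -> R.

Definition welfare (Fh : profile) (u : alloc) : R := \sum_(j < N) Fh j (u j).
Definition feasible (u : alloc) : Prop := \sum_(j < N) u j = 0.
Definition optimal (Fh : profile) (u : alloc) : Prop :=
  feasible u /\ forall u', feasible u' -> welfare Fh u' <= welfare Fh u.

(* Problem with agent i removed (the value u i is irrelevant). *)
Definition welfare_wo (Fh : profile) (i : 'I_N) (u : alloc) : R :=
  \sum_(j < N | j != i) Fh j (u j).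
Definition feasible_wo (i : 'I_N) (u : alloc) : Prop :=
  \sum_(j < N | j != i) u j = 0.
Definition optimal_wo (Fh : profile) (i : 'I_N) (u : alloc) : Prop :=
  feasible_wo i u /\
  forall u', feasible_wo i u' -> welfare_wo Fh i u' <= welfare_wo Fh i u.

(* SVCG payment of agent i: w = u*(Fh), v = u^(i)(Fh). *)
Definition svcg_pay (c : R) (Fh : profile) (w v : alloc) (i : 'I_N) : R :=
  c * welfare_wo Fh i v - welfare_wo Fh i w.

Definition replace_bid (Fh : profile) (i : 'I_N) (g : R -> R) : profile :=
  fun j => if j == i then g else Fh j.

(* Incentive compatibility: for every agent i, every bid profile Fh
   (i.e. every bids of the others and every bid Fh i of agent i), and
   whatever optimal solutions the ISO computes, bidding truthfully gives
   agent i a net utility at least that of bidding Fh i. *)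
Definition svcg_IC (c : R) (F : profile) : Prop :=
  forall (i : 'I_N) (Fh : profile) (w w' v v' : alloc),
    optimal (replace_bid Fh i (F i)) w ->
    optimal_wo (replace_bid Fh i (F i)) i v ->
    optimal Fh w' ->
    optimal_wo Fh i v' ->
    F i (w' i) - svcg_pay c Fh w' v' i
      <= F i (w i) - svcg_pay c (replace_bid Fh i (F i)) w v i.

Definition svcg_EF (c : R) (F : profile) : Prop :=
  forall w : alloc, optimal F w ->
    feasible w /\ forall u, feasible u -> welfare F u <= welfare F w.

Definition svcg_BB (c : R) (F : profile) : Prop :=
  forall (w : alloc) (v : 'I_N -> alloc),
    optimal F w -> (forall i, optimal_wo F i (v i)) ->
    0 <= \sum_(i < N) svcg_pay c F w (v i) i.

Definition svcg_IR (c : R) (F : profile) : Prop :=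
  forall (w : alloc) (v : 'I_N -> alloc),
    optimal F w -> (forall i, optimal_wo F i (v i)) ->
    forall i, 0 <= F i (w i) - svcg_pay c F w (v i) i.

End SVCG.

(* Main.v *)
Require Import Defs.
From mathcomp Require Import all_boot all_order all_algebra.
From mathcomp Require Import reals.
From mathcomp Require Import lra.
Import Order.TTheory GRing.Theory Num.Theory.
Local Open Scope ring_scope.

Lemma welfare_split (R : realType) (N : nat) (Fh : profile R N) (u : alloc R N) i :
  welfare Fh u = Fh i (u i) + welfare_wo Fh i u.
Proof. by rewrite /welfare /welfare_wo (bigD1 i). Qed.
Arguments welfare_split {R N} Fh u i.


Lemma opt_wo_val (R : realType) (N : nat) (Fh : profile R N) i v v' :
  optimal_wo Fh i v -> optimal_wo Fh i v' -> welfare_wo Fh i v = welfare_wo Fh i v'.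
Proof.
by move=> [f1 o1] [f2 o2]; apply/le_anti; rewrite o1 // o2.
Qed.
Arguments opt_wo_val {R N Fh i v v'}.


Lemma wo_replace (R : realType) (N : nat) (Fh : profile R N) i g x :
  welfare_wo (replace_bid Fh i g) i x = welfare_wo Fh i x.
Proof.
by apply: eq_bigr => j /negbTE Hj; rewrite /replace_bid Hj.
Qed.
Arguments wo_replace {R N} Fh i g x.


Lemma optwo_replace (R : realType) (N : nat) (Fh : profile R N) i g x :
  optimal_wo (replace_bid Fh i g) i x -> optimal_wo Fh i x.
Proof.
by move=> [f o]; split => // u' fu'; rewrite -!(wo_replace Fh i g) o.
Qed.
Arguments optwo_replace {R N Fh i g x}.


Lemma bmax (R : realType) (I : eqType) (s : seq I) (H : I -> R) x0 i :
  i \in s -> H i <= \big[Num.max/x0]_(k <- s) H k.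
Proof.
elim: s => //= a s IH; rewrite in_cons big_cons le_max => /orP[/eqP->|/IH->];
  by rewrite ?lexx ?orbT.
Qed.
Lemma bmax2 (R : realType) (N : nat) (H : 'I_N -> R) x0 i :
  H i <= \big[Num.max/x0]_(k < N) H k.
Proof. by apply: bmax; rewrite mem_index_enum. Qed.

Theorem theorem1 (R : realType) (N : nat) (HN : (2 <= N)%N)
  (F : 'I_N -> R -> R) (ustar : 'I_N -> R) (uI : 'I_N -> 'I_N -> R)
  (Hustar : optimal F ustar)
  (Hustar_uniq : forall u, optimal F u -> u = ustar)
  (HuI : forall i, optimal_wo F i (uI i))
  (HuI_uniq : forall i u, optimal_wo F i u ->
                forall j, j != i -> u j = uI i j) :
  let H := fun i : 'I_N => \sum_(j < N | j != i) F j (uI i j) in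
  let Hmax := \big[Num.max/H (@Ordinal N 0 (ltnW HN))]_(i < N) H i in
  let Ftotal := \sum_(j < N) F j (ustar j) in
  0 < Ftotal ->
  (forall i, 0 < H i) ->
  (N.-1)%:R * Hmax <= \sum_(i < N) H i ->
  exists clow chigh : R, clow <= chigh /\
    forall c : R, clow <= c <= chigh ->
      [/\ svcg_IC c F, svcg_EF c F, svcg_BB c F & svcg_IR c F].
Proof.
move=> H Hmax Ft Ftpos Hpos MPB.
set i0 := Ordinal (ltnW HN).
have HleHmax : forall i, H i <= Hmax by move=> i; apply: bmax2.
set S := \sum_(i < N) H i.
have Hmaxpos : 0 < Hmax by apply: lt_le_trans (HleHmax i0).
have Spos : 0 < S.
  by rewrite /S (bigD1 i0) //= ltr_pwDl ?Hpos // sumr_ge0 // => i _; apply/ltW.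
have hv : forall i v, optimal_wo F i v -> welfare_wo F i v = H i.
  by move=> i v hv; rewrite (opt_wo_val hv (HuI i)).
have hw : forall i, welfare_wo F i ustar = Ft - F i (ustar i).
  by move=> i; rewrite /Ft -/(welfare F ustar) (welfare_split F ustar i) addrC addKr.
exists ((N.-1)%:R * Ft / S), (Ft / Hmax); split.
  rewrite ler_pdivrMr // mulrAC ler_pdivlMr //.
  have := ler_wpM2l (ltW Ftpos) MPB.
  by rewrite [_ * Ft]mulrC -mulrA.
move=> c /andP[clo chi].
have c0 : 0 <= c.
  apply: le_trans clo; apply: divr_ge0 (ltW Spos).
  by apply: mulr_ge0 (ltW Ftpos).
split.
- move=> i Fh w w' v v' ow ov ow' ov'.
  rewrite /svcg_pay.
  have ov2 := optwo_replace ov.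
  rewrite (opt_wo_val ov' ov2) wo_replace.
  have e1 : forall x, F i (x i) + welfare_wo Fh i x = welfare (replace_bid Fh i (F i)) x.
    by move=> x; rewrite (welfare_split _ _ i) wo_replace /replace_bid eqxx.
  have := e1 w; have := e1 w'; rewrite wo_replace.
  have : welfare (replace_bid Fh i (F i)) w' <= welfare (replace_bid Fh i (F i)) w.
    by case: ow => _ ->; case: ow'.
  lra.
- by move=> w [].
- move=> w v ow ov; rewrite (Hustar_uniq _ ow) /svcg_pay.
  under eq_bigr => i _ do rewrite (hv i _ (ov i)) hw.
  rewrite sumrB -mulr_sumr -/S sumrB sumr_const card_ord -/Ft subr_ge0.
  rewrite ler_pdivrMr // in clo.
  apply: le_trans clo.
  by rewrite -{1}(prednK (ltnW HN)) mulrSr addrK mulr_natl.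
- move=> w v ow ov i; rewrite (Hustar_uniq _ ow) /svcg_pay hv ?hw //.
  rewrite ler_pdivlMr // in chi.
  have : c * H i <= Ft by apply: le_trans chi; apply: ler_wpM2l.
  lra.
Qed.
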